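(* Let $A_K^*\in\mathbb{R}^{n\times n}$, let $x^*(0)\in\mathbb{R}^n$, and let $x^*(t)=e^{A_K^* t}x^*(0)$. Fix sample times $t_1,\dots,t_N$, one of which equals $0$, so that $x^*(0)$ is a column of $\Lambda_0$. Let $\Lambda_i$, $\bar\Lambda_1$, $\bar\Lambda_2$ be the data matrices defined in the context. If $M\in\mathbb{R}^{n\times n}$ satisfies $M\bar\Lambda_1=\bar\Lambda_2$, then the solution $\hat x$ of $\dot{\hat x}=M\hat x$ with $\hat x(0)=x^*(0)$ satisfies $\hat x(t)=x^*(t)$ for all $t$.
   Context: Data matrices: for each $i=0,1,\dots,n$, let $x^{*(i)}$ denote the $i$-th time derivative of $x^*$. Define $\Lambda_i=[x^{*(i)}(t_1)\ \cdots\ x^{*(i)}(t_N)]\in\mathbb{R}^{n\times N}$. Define $\bar\Lambda_1=[\Lambda_0\ \Lambda_1\ \cdots\ \Lambda_{n-1}]\in\mathbb{R}^{n\times nN}$ and $\bar\Lambda_2=[\Lambda_1\ \Lambda_2\ \cdots\ \Lambda_n]\in\mathbb{R}^{n\times nN}$. In particular $\Lambda_{i}=A_K^*\Lambda_{i-1}$ for $i=1,\dots,n$, and $A_K^*\bar\Lambda_1=\bar\Lambda_2$. *)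

(* Defs.v *)
From HB Require Import structures.
From mathcomp Require Import all_boot all_order all_algebra.
From mathcomp Require Import all_classical all_reals all_analysis.
Set Implicit Arguments. Unset Strict Implicit. Unset Printing Implicit Defensive.
Import Order.TTheory GRing.Theory Num.Theory.
Import numFieldNormedType.Exports.
Local Open Scope ring_scope.
Local Open Scope classical_set_scope.

Definition expmx (R : realType) (n : nat) (A : 'M[R]_n) : 'M[R]_n :=
  lim ((fun N : nat => \sum_(k < N) (k`!%:R)^-1 *: A ^+ k) @ \oo).

Definition traj (R : realType) (n : nat) (A : 'M[R]_n) (x0 : 'cV[R]_n)
  : R -> 'cV[R]_n := fun t => expmx (t *: A) *m x0.

Definition Lambda (R : realType) (n N : nat) (x : R -> 'cV[R]_n) (ts : 'I_N -> R)
  (i : nat) : 'M[R]_(n, N) :=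
  \matrix_(r < n, j < N) (derive1n i x (ts j)) r ord0.

Definition Lambda_bar1 (R : realType) (n N : nat) (x : R -> 'cV[R]_n) (ts : 'I_N -> R) :=
  \mxrow_(i < n) Lambda x ts i.

Definition Lambda_bar2 (R : realType) (n N : nat) (x : R -> 'cV[R]_n) (ts : 'I_N -> R) :=
  \mxrow_(i < n) Lambda x ts i.+1.

(* Main.v *)
From HB Require Import structures.
From mathcomp Require Import all_boot all_order all_algebra.
From mathcomp Require Import all_classical all_reals all_analysis.
From mathcomp Require Import ring lra.
Require Import Defs.
Import Order.TTheory GRing.Theory Num.Theory.
Import numFieldNormedType.Exports.
Local Open Scope ring_scope.
Set Implicit Arguments. Unset Strict Implicit. Unset Printing Implicit Defensive.

Local Open Scope classical_set_scope.
Section ODE.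
Variable R : realType.
Variable n : nat.

Definition gam (A : 'M[R]_n) : R := \sum_(i < n) \sum_(j < n) `|A i j|.
Lemma gam_ge0 A : 0 <= gam A.
Proof. by apply: sumr_ge0 => i _; apply: sumr_ge0. Qed.

Lemma entry_is_derive p q (F : R -> 'M[R]_(p, q)) (D : 'M[R]_(p, q)) (t : R) i j :
  is_derive t 1 F D -> is_derive t 1 (fun s => F s i j) (D i j).
Proof.
move=> H.
have dF : derivable F t 1 by case: H.
have dij : derivable (fun s => F s i j) t 1 by exact: ((derivable_mxP F t 1).1 dF i j).
apply: DeriveDef => //.
have := derive_mx dF; rewrite derive_val => ->.
by rewrite mxE.
Qed.

Lemma is_derive_expRM (a s : R) :
  is_derive s 1 (fun u => expR (a * u)) (a * expR (a * s)).
Proof.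
have H1 : is_derive s 1 (a \*: id) (a *: (1 : R)) by apply: is_deriveZ.
have d1 : derivable (a \*: (@id R)) s 1 := ex_derive.
have d2 : derivable (@expR R) ((a \*: (@id R)) s) 1 := ex_derive.
have dc : derivable (expR \o (a \*: (@id R))) s 1.
  apply/derivable1_diffP; apply: differentiable_comp; exact/derivable1_diffP.
apply: DeriveDef => //.
rewrite -derive1E derive1_comp // !derive1E !derive_val.
by rewrite /GRing.scale /= mulr1 mulrC.
Qed.

Variables (M : 'M[R]_n) (z : R -> 'cV[R]_n).
Hypothesis hz : forall t : R, is_derive t 1 z (M *m z t).

Definition phi s := \sum_r z s r 0 * z s r 0.
Definition dphi s := \sum_r (z s r 0 *: (M *m z s) r 0 + z s r 0 *: (M *m z s) r 0).

Lemma is_derive_phi (s : R) : is_derive s 1 phi (dphi s).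
Proof.
have -> : phi = \sum_r ((fun u => z u r 0) * (fun u => z u r 0)).
  by apply/funext => u; rewrite /phi fct_sumE.
apply: is_derive_sum => r.
apply: is_deriveM; exact: entry_is_derive.
Qed.

Lemma phi_ge0 s : 0 <= phi s.
Proof. by apply: sumr_ge0 => r _; rewrite -expr2 sqr_ge0. Qed.

Lemma sq_le_phi s r : z s r 0 * z s r 0 <= phi s.
Proof.
rewrite /phi [leRHS](bigD1 r) //= lerDl.
by apply: sumr_ge0 => k _; rewrite -expr2 sqr_ge0.
Qed.

Lemma dphi_bound s : `|dphi s| <= 2 * gam M * phi s.
Proof.
rewrite /dphi /GRing.scale /=.
apply: le_trans (ler_norm_sum _ _ _) _.
apply: (@le_trans _ _ (\sum_r \sum_l 2 * (`|M r l| * phi s))).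
  apply: ler_sum => r _.
  rewrite mxE -mulr2n normrMn -mulr_sumr -[_ *+ 2]mulr_natl ler_wpM2l //.
  rewrite normrM; apply: (le_trans (ler_wpM2l (normr_ge0 _) (ler_norm_sum _ _ _))).
  rewrite mulr_sumr; apply: ler_sum => l _; rewrite normrM mulrCA ler_wpM2l //.
  have h1 := sq_le_phi s r; have h2 := sq_le_phi s l.
  have a0 := normr_ge0 (z s r 0); have b0 := normr_ge0 (z s l 0).
  have e1 : `|z s r 0| * `|z s r 0| = z s r 0 * z s r 0 by rewrite -normrM ger0_norm // -expr2 sqr_ge0.
  have e2 : `|z s l 0| * `|z s l 0| = z s l 0 * z s l 0 by rewrite -normrM ger0_norm // -expr2 sqr_ge0.
  rewrite -e1 in h1; rewrite -e2 in h2.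
  nra.
rewrite /gam -mulrA mulr_suml mulr_sumr; apply: ler_sum => r _.
rewrite mulr_suml mulr_sumr; apply: ler_sum => l _.
rewrite le_eqVlt; apply/orP; left; apply/eqP; ring.
Qed.

Lemma ode_uniq : z 0 = 0 -> forall t, z t = 0.
Proof.
move=> z0.
have phi0 : phi 0 = 0 by rewrite /phi z0 big1 // => r _; rewrite mxE mul0r.
set g := gam M.
have g0 : 0 <= g := gam_ge0 M.
pose psi a s := expR (a * s) * phi s.
have dpsi : forall a s : R, is_derive s 1 (psi a)
    (expR (a * s) * dphi s + phi s * (a * expR (a * s))).
  move=> a s; apply: is_derive_eq.
    exact: (is_deriveM (is_derive_expRM a s) (is_derive_phi s)).
  by rewrite /GRing.scale /=.
have cpsi : forall a, continuous (psi a).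
  move=> a x; apply: differentiable_continuous; apply/derivable1_diffP.
  exact: (@ex_derive _ _ _ _ _ _ _ (dpsi a x)).
have psi0 : forall a, psi a 0 = 0 by move=> a; rewrite /psi phi0 mulr0.
have phit : forall t, phi t = 0.
  move=> t.
  suff : phi t <= 0 by move=> h; apply/eqP; rewrite eq_le h phi_ge0.
  have [t0|t0] := leP 0 t.
    have [c _ Hc] := MVT_segment t0 (fun x _ => dpsi (- (2 * g)) x)
      (continuous_subspaceT (cpsi _)).
    have hd := dphi_bound c.
    have e0 := expR_gt0 (- (2 * g) * c).
    have p0 := phi_ge0 c.
    have hd' : dphi c <= 2 * g * phi c by apply: le_trans (ler_norm _) hd.
    have hneg : expR (- (2 * g) * c) * dphi c + phi c * (- (2 * g) * expR (- (2 * g) * c)) <= 0.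
      have -> : expR (- (2 * g) * c) * dphi c + phi c * (- (2 * g) * expR (- (2 * g) * c)) =
         expR (- (2 * g) * c) * (dphi c - 2 * g * phi c) by ring.
      by apply: mulr_ge0_le0; [exact: ltW | rewrite subr_le0].
    have : psi (- (2 * g)) t - psi (- (2 * g)) 0 <= 0.
      by rewrite Hc subr0; apply: mulr_le0_ge0.
    rewrite psi0 subr0.
    rewrite /psi pmulr_rle0 //; exact: expR_gt0.
  have t0' : t <= 0 by apply: ltW.
  have [c _ Hc] := MVT_segment t0' (fun x _ => dpsi (2 * g) x)
    (continuous_subspaceT (cpsi _)).
  have hd := dphi_bound c.
  have e0 := expR_gt0 (2 * g * c).
  have p0 := phi_ge0 c.
  have hd' : - (2 * g * phi c) <= dphi c.
    by move: hd; rewrite ler_norml => /andP[].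
  have : 0 <= psi (2 * g) 0 - psi (2 * g) t.
    rewrite Hc; apply: mulr_ge0; last by rewrite subr_ge0.
    have -> : expR (2 * g * c) * dphi c + phi c * (2 * g * expR (2 * g * c)) =
       expR (2 * g * c) * (dphi c + 2 * g * phi c) by ring.
    by apply: mulr_ge0; [exact: ltW | rewrite -lerBlDr sub0r].
  rewrite psi0 sub0r oppr_ge0 /psi pmulr_rle0 //; exact: expR_gt0.
move=> t; apply/matrixP => r c; rewrite (ord1 c) mxE.
have nn : forall k : 'I_n, xpredT k -> 0 <= z t k 0 * z t k 0.
  by move=> k _; rewrite -expr2 sqr_ge0.
have := @psumr_eq0P _ _ xpredT (fun r => z t r 0 * z t r 0) nn (phit t) r isT.
by move/eqP; rewrite mulf_eq0 orbb => /eqP.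
Qed.

End ODE.
Lemma CHform (R : comNzRingType) n' (A : 'M[R]_n'.+1) :
  A ^+ n'.+1 = - \sum_(i < n'.+1) (char_poly A)`_i *: A ^+ i.
Proof.
have := Cayley_Hamilton A.
rewrite -{1}[char_poly A]coefK poly_def linear_sum /= size_char_poly big_ord_recr /=.
have -> : (char_poly A)`_n'.+1 = 1.
  by have /monicP := char_poly_monic A; rewrite /lead_coef size_char_poly.
rewrite linearZ /= rmorphXn /= horner_mx_X scale1r.
move/eqP; rewrite addrC addr_eq0 => /eqP ->; congr (- _).
by apply: eq_bigr => i _; rewrite linearZ /= rmorphXn /= horner_mx_X.
Qed.

Lemma krylov (R : comNzRingType) n' (A M : 'M[R]_n'.+1) (x0 : 'cV[R]_n'.+1) :
  (forall i, (i < n'.+1)%N -> M *m (A ^+ i *m x0) = A ^+ i.+1 *m x0) ->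
  forall k, M *m (A ^+ k *m x0) = A ^+ k.+1 *m x0.
Proof.
move=> H; set c := fun i => (char_poly A)`_i.
have key : forall d, A ^+ (d + n'.+1) *m x0 =
    - \sum_(i < n'.+1) c i *: (A ^+ (d + i) *m x0).
  move=> d; rewrite exprD CHform mulrN mulr_sumr mulNmx mulmx_suml; congr (- _).
  by apply: eq_bigr => i _; rewrite -scalerAr -exprD scalemxAl.
elim/ltn_ind => k IH.
case: (ltnP k n'.+1) => [/H //|kn].
have [d kd] : exists d, k = (d + n'.+1)%N by exists (k - n'.+1)%N; rewrite subnK.
subst k.
rewrite key mulmxN mulmx_sumr -addSn key; congr (- _); apply: eq_bigr => i _.
by rewrite -scalemxAr IH ?addSn // ltn_add2l.
Qed.
Section S.
Variable R : realType.
Variable n : nat.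
Implicit Types A B : 'M[R]_n.

Definition cf A (m : nat) (i j : 'I_n) : R^nat := fun k => (A ^+ (k + m)) i j / k`!%:R.

Lemma entry_le_row A i : \sum_(l < n) `|A i l| <= gam A.
Proof.
rewrite /gam [leRHS](bigD1 i) //= lerDl.
by apply: sumr_ge0 => k _; apply: sumr_ge0.
Qed.

Lemma powA_bound A k i j : `|(A ^+ k) i j| <= gam A ^+ k.
Proof.
elim: k i j => [|k IH] i j.
  by rewrite expr0 mxE; case: (i == j); rewrite ?normr1 ?normr0.
rewrite exprS -mulmxE mxE exprS.
apply: le_trans (ler_norm_sum _ _ _) _.
apply: (@le_trans _ _ (\sum_l `|A i l| * gam A ^+ k)).
  by apply: ler_sum => l _; rewrite normrM ler_wpM2l.
by rewrite -mulr_suml ler_wpM2r ?exprn_ge0 ?gam_ge0 ?entry_le_row.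
Qed.

Lemma cvg_cf A m i j x : cvgn (pseries (cf A m i j) x).
Proof.
apply: normed_cvg; rewrite /normed_series_of /=.
apply: (@series_le_cvg _ _ ((gam A ^+ m) *: exp_coeff (gam A * `|x|))).
- by move=> k.
- move=> k; rewrite /= mulr_ge0 ?exprn_ge0 ?gam_ge0 //.
  by apply: exp_coeff_ge0; rewrite mulr_ge0 ?gam_ge0.
- move=> k /=; rewrite /cf normrM normrX normrM normfV normr_nat.
  rewrite /exp_coeff !fctE /=.
  apply: (@le_trans _ _ (gam A ^+ (k+m) / k`!%:R * `|x| ^+ k)).
    by rewrite ler_wpM2r ?exprn_ge0 // ler_wpM2r ?invr_ge0 // powA_bound.
  rewrite le_eqVlt; apply/orP; left; apply/eqP.
  rewrite exprD exprMn /GRing.scale /=; ring.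
- apply: is_cvg_seriesZ; exact: is_cvg_series_exp_coeff.
Qed.

Lemma diffs_cf A m i j : pseries_diffs (cf A m i j) = cf A m.+1 i j.
Proof.
apply/funext => k; rewrite /pseries_diffs /cf factS natrM invfM.
rewrite addSn -addnS; field.
by rewrite pnatr_eq0 -lt0n fact_gt0 /=.
Qed.

Definition Lf A m i j (t : R) := limn (pseries (cf A m i j) t).

Lemma is_derive_Lf A m i j (t : R) : is_derive t 1 (Lf A m i j) (Lf A m.+1 i j t).
Proof.
rewrite /Lf -diffs_cf.
apply: (@pseries_snd_diffs _ _ (`|t| + 1)).
- exact: cvg_cf.
- by rewrite diffs_cf; exact: cvg_cf.
- by rewrite !diffs_cf; exact: cvg_cf.
by rewrite [ltRHS]ger0_norm ?ltrDl // addr_ge0.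
Qed.


Definition Sm A (t : R) (N : nat) : 'M[R]_n :=
  \sum_(k < N) (k`!%:R)^-1 *: (t *: A) ^+ k.

Definition Lm A (t : R) : 'M[R]_n := \matrix_(i, j) Lf A 0 i j t.

Lemma expZ (a : R) A k : (a *: A) ^+ k = a ^+ k *: A ^+ k.
Proof.
elim: k => [|k IH]; first by rewrite !expr0 scale1r.
by rewrite !exprS IH -!mulmxE -scalemxAl -scalemxAr scalerA.
Qed.

Lemma Sm_entry A t N i j : Sm A t N i j = pseries (cf A 0 i j) t N.
Proof.
rewrite /Sm /pseries /series /= big_mkord summxE; apply: eq_bigr => k _.
by rewrite expZ !mxE /cf addn0 mulrA mulrC mulrA [_ * _^-1]mulrC.
Qed.

Lemma mx_cvg p q (F : nat -> 'M[R]_(p, q)) (L : 'M[R]_(p, q)) :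
  (forall i j, (fun N => F N i j) @ \oo --> L i j) -> F @ \oo --> L.
Proof.
move=> FL; apply/cvgrPdist_le => /= e e0.
near=> x.
rewrite /Num.Def.normr/= mx_normrE (bigmax_le _ (ltW e0))//= => i _.
rewrite !mxE/=.
move: i; near: x; apply: filter_forall => /= i.
exact: ((cvgrPdist_le _ _).1 (FL i.1 i.2)).
Unshelve. all: by end_near. Qed.

Lemma cvg_bigsum (I : finType) (f : I -> nat -> R) (a : I -> R) :
  (forall i, f i @ \oo --> a i) ->
  (fun N => \sum_i f i N) @ \oo --> \sum_i a i.
Proof.
move=> fa.
have -> : (fun N => \sum_i f i N) = \sum_i f i.
  by apply/funext => N; rewrite fct_sumE.
elim/big_ind2 : _ => //.
- exact: cvg_cst.
- by move=> u x v y ux vy; apply: cvgD.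
Qed.

Lemma entry_expand p q (C : 'M[R]_(p, n)) (L : 'M[R]_n) (X : 'M[R]_(n, q)) r s :
  (C *m L *m X) r s = \sum_l \sum_k C r l * L l k * X k s.
Proof.
rewrite mxE exchange_big /=; apply: eq_bigr => k _.
by rewrite mxE mulr_suml.
Qed.

Lemma ecvg_lin p q (C : 'M[R]_(p, n)) (X : 'M[R]_(n, q)) (F : nat -> 'M[R]_n) (L : 'M[R]_n) :
  (forall i j, (fun N => F N i j) @ \oo --> L i j) ->
  forall r s, (fun N => (C *m F N *m X) r s) @ \oo --> (C *m L *m X) r s.
Proof.
move=> FL r s.
under eq_fun do rewrite entry_expand.
rewrite entry_expand.
apply: cvg_bigsum => l; apply: cvg_bigsum => k.
apply: cvgMr_tmp; apply: cvgMl_tmp; exact: FL.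
Qed.

Lemma Sm_cvg A t i j : (fun N => Sm A t N i j) @ \oo --> Lm A t i j.
Proof.
under eq_fun do rewrite Sm_entry.
by rewrite mxE; exact: cvg_cf.
Qed.

Lemma expmxE A t : expmx (t *: A) = Lm A t.
Proof.
rewrite /expmx; apply: cvg_lim => //.
exact: (mx_cvg (fun i j => @Sm_cvg A t i j)).
Qed.


Lemma ASm_entry A t N i j : (A *m Sm A t N) i j = pseries (cf A 1 i j) t N.
Proof.
rewrite /Sm mulmx_sumr summxE /pseries /series /= big_mkord; apply: eq_bigr => k _.
rewrite -scalemxAr expZ -scalemxAr mulmxE -exprS !mxE /cf addn1.
by rewrite mulrA mulrC mulrA [_ * _^-1]mulrC.
Qed.

Lemma Lf1E A t i j : Lf A 1 i j t = (A *m Lm A t) i j.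
Proof.
rewrite /Lf.
have -> : pseries (cf A 1 i j) t = (fun N => (A *m Sm A t N *m 1%:M) i j).
  by apply/funext => N; rewrite mulmx1 ASm_entry.
apply: cvg_lim => //.
have := @ecvg_lin _ _ A 1%:M _ _ (fun i j => @Sm_cvg A t i j) i j.
by rewrite mulmx1.
Qed.

Lemma mx_is_derive p q (F : R -> 'M[R]_(p, q)) (D : 'M[R]_(p, q)) (t : R) :
  (forall i j, is_derive t 1 (fun s => F s i j) (D i j)) -> is_derive t 1 F D.
Proof.
move=> H.
have dF : derivable F t 1 by apply/derivable_mxP => i j; exact: ex_derive.
apply: DeriveDef => //; rewrite derive_mx //; apply/matrixP => i j.
by rewrite mxE derive_val.
Qed.

Lemma is_derive_CLX p q (C : 'M[R]_(p, n)) (X : 'M[R]_(n, q)) A (t : R) :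
  is_derive t 1 (fun s => C *m Lm A s *m X) (C *m A *m Lm A t *m X).
Proof.
apply: mx_is_derive => r s'.
have -> : (fun s => (C *m Lm A s *m X) r s') =
    \sum_l \sum_k (fun s => (C r l * X k s') * Lf A 0 l k s).
  apply/funext => s; rewrite entry_expand !fct_sumE; apply: eq_bigr => l _.
  rewrite !fct_sumE; apply: eq_bigr => k _; rewrite mxE; ring.
rewrite -(mulmxA C A) (entry_expand C (A *m Lm A t) X).
apply: is_derive_sum => l; apply: is_derive_sum => k.
apply: is_derive_eq.
  exact: (is_deriveZ (C r l * X k s') (is_derive_Lf A 0 l k t)).
by rewrite -Lf1E /GRing.scale /=; ring.
Qed.



Lemma Lm0 A : Lm A 0 = 1%:M.
Proof.
rewrite -expmxE /expmx; apply: cvg_lim => //.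
apply: cvg_near_cst; near=> N.
have HN : (0 < N)%N by near: N; exists 1%N.
rewrite -(prednK HN) big_ord_recl /= fact0 invr1 scale1r expr0 scale0r big1 ?addr0 //.
by move=> k _; rewrite expr0n /= scaler0.
Unshelve. all: by end_near. Qed.

End S.

Theorem lemma3 (R : realType) (n N : nat) (AK M : 'M[R]_n) (x0 : 'cV[R]_n)
  (ts : 'I_N -> R) (xhat : R -> 'cV[R]_n) :
  (exists j : 'I_N, ts j = 0) ->
  M *m Lambda_bar1 (traj AK x0) ts = Lambda_bar2 (traj AK x0) ts ->
  (forall t : R, is_derive t 1 xhat (M *m xhat t)) ->
  xhat 0 = x0 ->
  forall t : R, xhat t = traj AK x0 t.
Proof.
move=> [j0 Hj0] HM Hder H0 t.
destruct n as [|n'].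
  by apply/matrixP => -[i Hi].
set y := traj AK x0.
have yE : y = fun s => 1%:M *m Lm AK s *m x0.
  by apply/funext => s; rewrite /y /traj expmxE mul1mx.
have Dn : forall k, derive1n k y = fun s => AK ^+ k *m Lm AK s *m x0.
  elim => [|k IH].
    by rewrite derive1n0 yE; apply/funext => s; rewrite expr0.
  rewrite derive1nS IH; apply/funext => s; rewrite derive1E.
  have D := is_derive_CLX (AK ^+ k) x0 AK s.
  by rewrite derive_val mulmxE -exprSr.
have dn0 : forall k, derive1n k y 0 = AK ^+ k *m x0.
  by move=> k; rewrite Dn Lm0 mulmx1.
have hyp : forall i, (i < n'.+1)%N -> M *m (AK ^+ i *m x0) = AK ^+ i.+1 *m x0.
  move=> i Hi.
  have := congr1 (fun B => submxrow B (Ordinal Hi)) HM.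
  rewrite /Lambda_bar1 /Lambda_bar2 mul_mxrow !mxrowK /= => HL.
  rewrite -!dn0 -Hj0; apply/matrixP => r c; rewrite (ord1 c).
  have := congr1 (fun B : 'M[R]_(n'.+1, N) => B r j0) HL; rewrite !mxE => <-.
  by apply: eq_bigr => l _; rewrite !mxE.
have kry := krylov hyp.
have My : forall s, M *m y s = AK *m y s.
  move=> s; apply/eqP; rewrite -subr_eq0 -mulmxBl; apply/eqP.
  rewrite yE mul1mx mulmxA; apply/matrixP => r c.
  have hc := @ecvg_lin _ _ _ _ (M - AK) x0 _ _ (fun i j => @Sm_cvg _ _ AK s i j) r c.
  have z0 : forall N, ((M - AK) *m Sm AK s N *m x0) = 0.
    move=> N'; rewrite /Sm mulmx_sumr mulmx_suml big1 // => k _.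
    rewrite -scalemxAr expZ -scalemxAr -!scalemxAl -mulmxA mulmxBl kry.
    by rewrite mulmxA mulmxE -exprS subrr !scaler0.
  rewrite -(cvg_lim _ hc) //.
  under eq_fun do rewrite z0.
  rewrite mxE; apply: cvg_lim => //; exact: cvg_cst.
have dy : forall s : R, is_derive s 1 y (M *m y s).
  move=> s; rewrite My yE; apply: is_derive_eq; first exact: is_derive_CLX.
  by rewrite !mul1mx mulmxA.
have dz : forall s : R, is_derive s 1 (xhat - y) (M *m (xhat - y) s).
  move=> s; have h := is_deriveB (Hder s) (dy s).
  by apply: (is_derive_eq h); rewrite -mulmxBr.
have z0 : (xhat - y) 0 = 0.
  by change (xhat 0 - y 0 = 0); rewrite H0 -[y 0]/(derive1n 0 y 0) dn0 expr0 mul1mx subrr.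
have := ode_uniq dz z0 t.
by change (xhat t - y t = 0 -> xhat t = y t) => /eqP; rewrite subr_eq0 => /eqP.
Qed.
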